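(* There exists a $(364,14)$-arc in $\operatorname{PG}(2,29)$; hence $m_{14}(2,29)\ge 364$.
   Context: Points of $\operatorname{PG}(2,q)$ are the 1-dimensional subspaces of $\operatorname{GF}(q)^3$, lines are the 2-dimensional subspaces. An $(n,r)$-arc in $\operatorname{PG}(2,q)$ is a set $\mathcal B$ of $n$ points such that every line contains at most $r$ points of $\mathcal B$ and at least one line contains exactly $r$ points of $\mathcal B$. $m_r(2,q)$ is the maximum $n$ for which an $(n,r)$-arc in $\operatorname{PG}(2,q)$ exists. *)

(* Defs.v *)
From mathcomp Require Import all_boot all_algebra.
Set Implicit Arguments. Unset Strict Implicit. Unset Printing Implicit Defensive.
Import GRing.Theory.
Local Open Scope ring_scope.

Definition PG_point (F : fieldType) (U : {vspace 'rV[F]_3}) : bool := \dim U == 1%N.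
Definition PG_line (F : fieldType) (L : {vspace 'rV[F]_3}) : bool := \dim L == 2%N.

Definition on_line (F : fieldType) (B : seq {vspace 'rV[F]_3}) (L : {vspace 'rV[F]_3}) : nat :=
  count (fun P => (P <= L)%VS) B.

Definition is_arc (F : fieldType) (B : seq {vspace 'rV[F]_3}) (n r : nat) : Prop :=
  [/\ uniq B, all (@PG_point F) B, size B = n,
      (forall L, PG_line L -> (on_line B L <= r)%N)
    & exists2 L, PG_line L & on_line B L = r].

(* Main.v *)
From Stdlib Require Import ZArith.
From Stdlib Require FMapPositive.
Require Import Defs.
From mathcomp Require Import all_boot all_algebra.
From mathcomp Require Import zify ring.

Set Implicit Arguments. Unset Strict Implicit. Unset Printing Implicit Defensive.
Import GRing.Theory.

Module PM := FMapPositive.PositiveMap.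

Definition pt := (nat * nat * nat)%type.
Definition pts : seq pt := [:: (0,1,5); (0,1,7); (0,1,17); (0,1,21); (0,1,23); (0,1,0); (0,1,2); (0,1,6); (0,1,8); (0,1,10); (0,1,14); (0,1,24); (0,1,26); (1,1,9); (1,1,19); (1,1,25); (1,1,27); (1,1,4); (1,1,8); (1,1,10); (1,1,12); (1,1,26); (1,1,28); (1,2,6); (1,2,14); (1,2,18); (1,2,20); (1,2,22); (1,2,24); (1,2,1); (1,2,5); (1,2,11); (1,2,13); (1,2,15); (1,2,17); (1,2,21); (1,2,0); (1,3,5); (1,3,9); (1,3,11); (1,3,13); (1,3,15); (1,3,21); (1,3,25); (1,3,2); (1,3,6); (1,3,8); (1,3,12); (1,3,20); (1,4,6); (1,4,10); (1,4,12); (1,4,14); (1,4,18); (1,4,20); (1,4,24); (1,4,26); (1,4,28); (1,4,3); (1,4,15); (1,4,23); (1,4,25); (1,5,11); (1,5,13); (1,5,21); (1,5,23); (1,5,4); (1,5,8); (1,5,10); (1,5,12); (1,5,18); (1,5,24); (1,5,26); (1,6,10); (1,6,20); (1,6,22); (1,6,3); (1,6,9); (1,6,11); (1,6,15); (1,6,17); (1,6,21); (1,6,23); (1,6,25); (1,6,0); (1,7,15); (1,7,19); (1,7,21); (1,7,23); (1,7,27); (1,7,0); (1,7,4); (1,7,6); (1,7,12); (1,7,22); (1,7,24); (1,7,3); (1,7,5); (1,8,12); (1,8,16); (1,8,18); (1,8,22); (1,8,28); (1,8,3); (1,8,9); (1,8,11); (1,8,13); (1,8,15); (1,8,19); (1,8,27);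 (1,9,11); (1,9,13); (1,9,15); (1,9,19); (1,9,2); (1,9,10); (1,9,12); (1,9,22); (1,9,26); (1,9,1); (1,9,7); (1,10,14); (1,10,18); (1,10,26); (1,10,28); (1,10,1); (1,10,5); (1,10,13); (1,10,19); (1,10,27); (1,10,2); (1,10,6); (1,10,8); (1,11,13); (1,11,15); (1,11,17); (1,11,19); (1,11,25); (1,11,0); (1,11,6); (1,11,8); (1,11,10); (1,11,12); (1,11,16); (1,11,24); (1,11,1); (1,11,9); (1,12,14); (1,12,20); (1,12,28); (1,12,3); (1,12,5); (1,12,7); (1,12,9); (1,12,15); (1,12,19); (1,12,25); (1,12,27); (1,12,0); (1,12,2); (1,12,6); (1,13,15); (1,13,25); (1,13,27); (1,13,6); (1,13,8); (1,13,18); (1,13,22); (1,13,24); (1,13,26); (1,13,1); (1,13,3); (1,13,7); (1,14,20); (1,14,22); (1,14,24); (1,14,28); (1,14,7); (1,14,13); (1,14,21); (1,14,25); (1,14,27); (1,14,0); (1,14,2); (1,14,8); (1,14,12); (1,15,17); (1,15,21); (1,15,27); (1,15,0); (1,15,2); (1,15,4); (1,15,8); (1,15,22); (1,15,1); (1,15,5); (1,15,7); (1,15,9); (1,15,11); (1,16,18); (1,16,20); (1,16,22); (1,16,26); (1,16,28); (1,16,3); (1,16,5); (1,16,7); (1,16,11); (1,16,21); (1,16,23); (1,16,2); (1,16,4); (1,16,14); (1,17,23); (1,17,27); (1,17,0); (1,17,2); (1,17,4); (1,17,10); (1,17,20); (1,17,22); (1,17,24); (1,17,26); (1,17,1); (1,17,9);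 (1,17,15); (1,18,20); (1,18,28); (1,18,5); (1,18,13); (1,18,17); (1,18,19); (1,18,21); (1,18,23); (1,18,0); (1,18,4); (1,18,10); (1,18,12); (1,18,14); (1,18,16); (1,19,23); (1,19,25); (1,19,27); (1,19,2); (1,19,10); (1,19,16); (1,19,24); (1,19,28); (1,19,1); (1,19,3); (1,19,5); (1,19,11); (1,19,15); (1,20,22); (1,20,24); (1,20,28); (1,20,1); (1,20,3); (1,20,7); (1,20,17); (1,20,19); (1,20,27); (1,20,0); (1,20,16); (1,20,18); (1,21,25); (1,21,2); (1,21,10); (1,21,14); (1,21,16); (1,21,18); (1,21,20); (1,21,26); (1,21,1); (1,21,7); (1,21,9); (1,21,11); (1,21,13); (1,21,17); (1,22,24); (1,22,26); (1,22,5); (1,22,7); (1,22,21); (1,22,25); (1,22,0); (1,22,2); (1,22,8); (1,22,10); (1,22,14); (1,23,0); (1,23,4); (1,23,8); (1,23,12); (1,23,14); (1,23,18); (1,23,20); (1,23,22); (1,23,26); (1,23,7); (1,23,9); (1,23,17); (1,23,19); (1,24,28); (1,24,3); (1,24,5); (1,24,7); (1,24,11); (1,24,13); (1,24,19); (1,24,21); (1,24,6); (1,24,8); (1,24,16); (1,24,18); (1,25,4); (1,25,6); (1,25,14); (1,25,16); (1,25,1); (1,25,3); (1,25,5); (1,25,9); (1,25,11); (1,25,15); (1,25,17); (1,25,19); (1,26,3); (1,26,9); (1,26,17); (1,26,21); (1,26,25); (1,26,4); (1,26,8); (1,26,14); (1,26,16); (1,26,18); (1,26,24); (1,27,0); (1,27,8);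 (1,27,12); (1,27,14); (1,27,16); (1,27,18); (1,27,24); (1,27,5); (1,27,7); (1,27,9); (1,27,11); (1,27,23); (1,28,1); (1,28,3); (1,28,13); (1,28,17); (1,28,19); (1,28,21); (1,28,25); (1,28,27); (1,28,2); (1,28,4); (1,28,6); (1,28,10); (1,28,20); (1,28,22)].
Module ZC.
Local Open Scope Z_scope.
Definition ptZ := (Z * Z * Z)%type.
Definition toZ (t : pt) : ptZ := (Z.of_nat t.1.1, Z.of_nat t.1.2, Z.of_nat t.2).
Definition crossZ (a b : ptZ) : ptZ :=
  let '(a0, a1, a2) := a in let '(b0, b1, b2) := b in
  ((a1 * b2 - a2 * b1), (a2 * b0 - a0 * b2), (a0 * b1 - a1 * b0)).
Definition dotmod (c n : ptZ) : bool :=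
  let '(c0, c1, c2) := c in let '(n0, n1, n2) := n in
  Z.eqb (Z.modulo (c0 * n0 + c1 * n1 + c2 * n2) 29) 0.
Definition scaleZ (k : Z) (n : ptZ) : ptZ :=
  let '(n0, n1, n2) := n in (Z.modulo (k * n0) 29, Z.modulo (k * n1) 29, Z.modulo (k * n2) 29).
Definition invZ (x : Z) : Z := Z.modulo (Z.pow x 27) 29.
Definition kof (n : ptZ) : Z :=
  let '(n0, n1, n2) := n in
  let r0 := Z.modulo n0 29 in let r1 := Z.modulo n1 29 in let r2 := Z.modulo n2 29 in
  if Z.eqb r0 0 then (if Z.eqb r1 0 then invZ r2 else invZ r1) else invZ r0.
Definition normZ (n : ptZ) : ptZ := scaleZ (kof n) n.
Definition keyZ (m : ptZ) : positive :=
  let '(m0, m1, m2) := m in Z.to_pos (1 + m0 * 841 + m1 * 29 + m2).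
Definition eqZ3 (m m' : ptZ) : bool :=
  let '(m0, m1, m2) := m in let '(n0, n1, n2) := m' in
  Z.eqb m0 n0 && Z.eqb m1 n1 && Z.eqb m2 n2.
Definition normals : seq ptZ :=
  (0, 0, 1) :: [seq (0, 1, Z.of_nat z) | z <- iota 0%nat 29%nat] ++
  [seq (1, Z.of_nat y, Z.of_nat z) | y <- iota 0%nat 29%nat, z <- iota 0%nat 29%nat].
Definition mktbl (z : seq ptZ) (ns : seq ptZ) : PM.t (ptZ * nat) :=
  foldr (fun m t => PM.add (keyZ m) (m, count (fun c => dotmod c m) z) t) (PM.empty _) ns.
Definition pair_ok (tbl : PM.t (ptZ * nat)) (a b : pt) : bool :=
  let m := normZ (crossZ (toZ a) (toZ b)) in
  match PM.find (keyZ m) tbl with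
  | Some (m', v) => eqZ3 m' m && leq v 14
  | None => false
  end.
Fixpoint pairs_ok (tbl : PM.t (ptZ * nat)) (s : seq pt) : bool :=
  match s with
  | [::] => true
  | a :: r => all (pair_ok tbl a) r && pairs_ok tbl r
  end.
End ZC.
Import ZC.

Module ZL.
Local Open Scope Z_scope.

Lemma mktbl_spec z ns k m' v :
  PM.find k (mktbl z ns) = Some (m', v) -> v = count (fun c => dotmod c m') z.
Proof.
elim: ns => [|m ns IH] /=; first by rewrite PM.gempty.
case: (Pos.eq_dec k (keyZ m)) => [->|ne].
  by rewrite PM.gss => -[<- <-].
by rewrite PM.gso //; apply: IH.
Qed.

Lemma eqZ3_eq m m' : eqZ3 m m' -> m = m'.
Proof.
case: m => [[m0 m1] m2]; case: m' => [[n0 n1] n2] /=.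
by move=> /andP[/andP[/Z.eqb_eq -> /Z.eqb_eq ->] /Z.eqb_eq ->].
Qed.

Lemma dotmod_scale c n k : dotmod c n -> dotmod c (scaleZ k n).
Proof.
case: c => [[c0 c1] c2]; case: n => [[n0 n1] n2] /= /Z.eqb_eq H.
apply/Z.eqb_eq.
apply/(Z.mod_divide _ 29 ltac:(discriminate)).
case: ((proj1 (Z.mod_divide _ 29 ltac:(discriminate))) H) => t Ht.
rewrite (Z.mod_eq (k * n0) 29) // (Z.mod_eq (k * n1) 29) // (Z.mod_eq (k * n2) 29) //.
exists (k * t - c0 * ((k * n0) / 29) - c1 * ((k * n1) / 29) - c2 * ((k * n2) / 29)).
have -> : (c0 * (k * n0 - 29 * (k * n0 / 29)) + c1 * (k * n1 - 29 * (k * n1 / 29)) +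
   c2 * (k * n2 - 29 * (k * n2 / 29)) =
   k * (c0 * n0 + c1 * n1 + c2 * n2) - 29 * (c0 * (k * n0 / 29) + c1 * (k * n1 / 29) + c2 * (k * n2 / 29))) by ring.
rewrite Ht; ring.
Qed.

End ZL.
Import ZL.

Definition Pn (c a b : pt) : nat :=
  c.1.1 * a.1.2 * b.2 + c.1.2 * a.2 * b.1.1 + c.2 * a.1.1 * b.1.2.
Definition Qn (c a b : pt) : nat :=
  c.1.1 * a.2 * b.1.2 + c.1.2 * a.1.1 * b.2 + c.2 * a.1.2 * b.1.1.
Definition colinN (a b c : pt) : bool := Pn c a b %% 29 == Qn c a b %% 29.

Lemma colinN_sym a b c : colinN a b c = colinN b a c.
Proof.
rewrite /colinN eq_sym; congr (_ %% 29 == _ %% 29); rewrite /Pn /Qn; lia.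
Qed.

Module ZL2.
Local Open Scope Z_scope.
Lemma colinN_link a b c : colinN a b c -> dotmod (toZ c) (crossZ (toZ a) (toZ b)).
Proof.
case: a => [[a0 a1] a2]; case: b => [[b0 b1] b2]; case: c => [[c0 c1] c2].
rewrite /colinN => /eqP H.
apply/Z.eqb_eq.
have E : Z.of_nat c0 * (Z.of_nat a1 * Z.of_nat b2 - Z.of_nat a2 * Z.of_nat b1) +
  Z.of_nat c1 * (Z.of_nat a2 * Z.of_nat b0 - Z.of_nat a0 * Z.of_nat b2) +
  Z.of_nat c2 * (Z.of_nat a0 * Z.of_nat b1 - Z.of_nat a1 * Z.of_nat b0) =
  Z.of_nat (Pn (c0, c1, c2) (a0, a1, a2) (b0, b1, b2)) -
   Z.of_nat (Qn (c0, c1, c2) (a0, a1, a2) (b0, b1, b2)).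
  rewrite /Pn /Qn /= !Nat2Z.inj_add !Nat2Z.inj_mul; ring.
rewrite /= E; move: H.
move: (Pn _ _ _) (Qn _ _ _) => X Y H.
rewrite (divn_eq X 29) (divn_eq Y 29) H.
move: (X %/ 29)%nat (Y %/ 29)%nat (Y %% 29)%nat => x y r.
rewrite !Nat2Z.inj_add !Nat2Z.inj_mul.
have -> : (Z.of_nat x * Z.of_nat 29 + Z.of_nat r - (Z.of_nat y * Z.of_nat 29 + Z.of_nat r)) = (Z.of_nat x - Z.of_nat y) * 29 by simpl; ring.
apply: Z_mod_mult.
Qed.
End ZL2.
Import ZL2.

Definition tbl0 := mktbl (map toZ pts) normals.
Lemma check_all_ok : pairs_ok tbl0 pts = true.
Proof. vm_compute. reflexivity. Qed.

Lemma pair_ok_spec a b : pair_ok tbl0 a b -> (count (colinN a b) pts <= 14)%N.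
Proof.
rewrite /pair_ok; case E: (PM.find _ _) => [[m' v]|] // /andP[/eqZ3_eq Em Hv].
have Ev := mktbl_spec E; subst v.
rewrite count_map in Hv; apply: leq_trans Hv.
apply: sub_count => c /colinN_link H.
rewrite Em; exact: (dotmod_scale (kof _) H).
Qed.

Lemma pairs_ok_spec s : pairs_ok tbl0 s ->
  forall a b, a \in s -> b \in s -> a != b -> pair_ok tbl0 a b || pair_ok tbl0 b a.
Proof.
elim: s => [|x s IH] //= /andP[/allP Hx Hs] a b.
rewrite !inE => /orP[/eqP->|Ha] /orP[/eqP->|Hb]; first by rewrite eqxx.
- by move=> _; rewrite Hx.
- by move=> _; rewrite Hx ?orbT.
- exact: IH.
Qed.

Lemma bound a b : a \in pts -> b \in pts -> a != b -> (count (colinN a b) pts <= 14)%N.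
Proof.
move=> Ha Hb ab.
have := pairs_ok_spec check_all_ok Ha Hb ab.
case/orP => [/pair_ok_spec //|/pair_ok_spec].
by rewrite (eq_count (colinN_sym b a)).
Qed.

Local Open Scope ring_scope.

Definition i1 : 'I_3 := @Ordinal 3 1 isT.
Definition i2 : 'I_3 := @Ordinal 3 2 isT.
Definition vec (t : pt) : 'rV['F_29]_3 :=
  \row_(k < 3) (if val k == 0%N then t.1.1 else if val k == 1%N then t.1.2 else t.2)%:R.
Definition detF (c u v : 'rV['F_29]_3) : 'F_29 :=
  c ord0 ord0 * (u ord0 i1 * v ord0 i2 - u ord0 i2 * v ord0 i1)
  - c ord0 i1 * (u ord0 ord0 * v ord0 i2 - u ord0 i2 * v ord0 ord0)
  + c ord0 i2 * (u ord0 ord0 * v ord0 i1 - u ord0 i1 * v ord0 ord0).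

Lemma detF_vec a b c : detF (vec c) (vec a) (vec b) = (Pn c a b)%:R - (Qn c a b)%:R.
Proof. rewrite /detF !mxE /= /Pn /Qn !natrD !natrM; ring. Qed.

Lemma detF0_colin a b c : detF (vec c) (vec a) (vec b) = 0 -> colinN a b c.
Proof.
rewrite detF_vec => /eqP; rewrite subr_eq0 => /eqP H.
have := congr1 (fun x : 'F_29 => nat_of_ord x) H; rewrite /= !val_Fp_nat // => E.
by rewrite /colinN E.
Qed.

Lemma det_lin x y u v : detF (x *: u + y *: v) u v = 0.
Proof. rewrite /detF !mxE; ring. Qed.

Lemma det_dep k u w : detF w u (k *: u) = 0.
Proof. rewrite /detF !mxE; ring. Qed.

Lemma size_pts : size pts = 364%N.
Proof. by []. Qed.

Lemma uniq_pts : uniq pts.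
Proof. by vm_compute. Qed.

Lemma not_line a b : a \in pts -> b \in pts -> a != b -> vec b \notin <[vec a]>%VS.
Proof.
move=> Ha Hb ab; apply/negP => /vlineP[k Hk].
have := bound Ha Hb ab.
rewrite (@eq_count _ _ predT) ?count_predT ?size_pts // => c.
by apply: detF0_colin; rewrite Hk det_dep.
Qed.

Lemma vec_neq0 a : a \in pts -> vec a != 0.
Proof.
move=> Ha.
have [b Hb ba] : exists2 b, b \in pts & b != a.
  case: (eqVneq a (0, 1, 5)%N) => [->|ne].
    by exists (0, 1, 7)%N.
  by exists (0, 1, 5)%N; rewrite // eq_sym.
apply/negP => /eqP E.
have := not_line Hb Ha ba; by rewrite E mem0v.
Qed.

Lemma dim2 (u v : 'rV['F_29]_3) : u != 0 -> v \notin <[u]>%VS -> \dim (<[u]> + <[v]>)%VS = 2%N.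
Proof.
move=> Hu Hv; apply/eqP; rewrite eqn_leq; apply/andP; split.
  apply: leq_trans (dimv_add_leqif _ _).1 _.
  by rewrite !dim_vline; case: (u != 0); case: (v != 0).
rewrite ltnNge; apply/negP => Hle.
have E : (<[u]> == <[u]> + <[v]>)%VS by rewrite eqEdim addvSl dim_vline Hu.
have : v \in (<[u]> + <[v]>)%VS by apply: (subvP (addvSr _ _)); apply: memv_line.
by rewrite -(eqP E) (negbTE Hv).
Qed.

Lemma line_eq (L : {vspace 'rV['F_29]_3}) a b : a \in pts -> b \in pts -> a != b ->
  vec a \in L -> vec b \in L -> \dim L = 2%N -> (<[vec a]> + <[vec b]>)%VS = L.
Proof.
move=> Ha Hb ab HaL HbL HL; apply/eqP.
by rewrite eqEdim subv_add -!memvE HaL HbL dim2 ?HL ?vec_neq0 ?not_line.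
Qed.

Definition Bset : seq {vspace 'rV['F_29]_3} := map (fun t => <[vec t]>%VS) pts.

Lemma upper (L : {vspace 'rV['F_29]_3}) : PG_line L -> (on_line Bset L <= 14)%N.
Proof.
rewrite /PG_line => /eqP HL.
rewrite /on_line /Bset count_map.
rewrite (@eq_count _ _ (fun t => vec t \in L)); last by move=> t; rewrite /= memvE.
case E: [seq t <- pts | vec t \in L] => [|a [|b s']].
- by rewrite -size_filter E.
- by rewrite -size_filter E.
have Ha : a \in [seq t <- pts | vec t \in L] by rewrite E inE eqxx.
have Hb : b \in [seq t <- pts | vec t \in L] by rewrite E !inE eqxx orbT.
have U : uniq [seq t <- pts | vec t \in L] by rewrite filter_uniq // uniq_pts.
rewrite mem_filter in Ha; rewrite mem_filter in Hb.
case/andP: Ha => HaL Ha; case/andP: Hb => HbL Hb.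
have ab : a != b.
  by move: U; rewrite E /= inE => /andP[/norP[] ].
rewrite -(line_eq Ha Hb ab HaL HbL HL).
apply: leq_trans (bound Ha Hb ab).
apply: sub_count => c /= /memv_addP[u /vlineP[x ->] [v /vlineP[y ->] Ec]].
by apply: detF0_colin; rewrite Ec det_lin.
Qed.

Definition e0 : 'rV['F_29]_3 := vec (1, 0, 0)%N.
Definition e1 : 'rV['F_29]_3 := vec (0, 1, 0)%N.
Definition L0 : {vspace 'rV['F_29]_3} := (<[e0]> + <[e1]>)%VS.

Lemma dimL0 : \dim L0 = 2%N.
Proof.
apply: dim2.
  apply/negP => /eqP E.
  have := congr1 (fun w : 'rV['F_29]_3 => w ord0 ord0) E.
  rewrite !mxE /= => H; move: H; rewrite -[X in X = _ -> _]natr1 add0r => /eqP; by rewrite oner_eq0.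
apply/negP => /vlineP[k Ek].
have := congr1 (fun w : 'rV['F_29]_3 => w ord0 i1) Ek.
rewrite !mxE /= mulr0 => H; move: H; rewrite -[X in X = _ -> _]natr1 add0r => /eqP; by rewrite oner_eq0.
Qed.

Lemma count_z0 : count (fun t : pt => t.2 == 0%N) pts = 14%N.
Proof. by vm_compute. Qed.

Lemma lower : (14 <= on_line Bset L0)%N.
Proof.
rewrite /on_line /Bset count_map.
suff Hs : (count (fun t : pt => t.2 == 0%N) pts <=
   count (preim (fun t : pt => <[vec t]>%VS) (fun P => (P <= L0)%VS)) pts)%N.
  by rewrite count_z0 in Hs.
apply: sub_count => -[[x y] z] /= /eqP ->.
rewrite -memvE.
have -> : vec (x, y, 0%N) = x%:R *: e0 + y%:R *: e1.
  apply/rowP => j; rewrite !mxE.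
  case: j => [[|[|[|j]]] Hj] //=; rewrite ?mulr1 ?mulr0 ?addr0 ?add0r //.
apply: memv_add; apply: memvZ; exact: memv_line.
Qed.

Lemma arc : is_arc Bset 364 14.
Proof.
split.
- rewrite map_inj_in_uniq ?uniq_pts // => a b Ha Hb E.
  apply/eqP; apply/negPn/negP => ab.
  by move: (not_line Ha Hb ab); rewrite E memv_line.
- apply/allP => P /mapP[t Ht ->]; by rewrite /PG_point dim_vline vec_neq0.
- by rewrite size_map size_pts.
- exact: upper.
- exists L0; first by rewrite /PG_line dimL0.
  by apply/eqP; rewrite eqn_leq lower andbT upper // /PG_line dimL0.
Qed.

Theorem mainTheorem14 :
  (exists B : seq {vspace 'rV['F_29]_3}, is_arc B 364 14) /\
  (forall N : nat,
     (forall (B : seq {vspace 'rV['F_29]_3}) (n : nat), is_arc B n 14 -> (n <= N)%N) ->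
     (364 <= N)%N).
Proof.
split; first by exists Bset; exact: arc.
move=> N H; exact: (H Bset 364%N arc).
Qed.
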